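(* For all $v\in V^X$, the sequence $(\lambda^k(v))_{k\in\mathbb{N}}$ is non-increasing and the sequence of sets $(\Lambda^k(v))_{k\in\mathbb{N}}$ is non-increasing for inclusion.
   Context: Let $\mathcal{G}$ be a quantitative reachability game on an arena $G=(\Pi,V,(V_i)_{i\in\Pi},E)$ (finite player set $\Pi$, finite vertex set $V$ with $|V|\ge2$, $|\Pi|\le|V|$, partition $(V_i)$, every vertex has a successor) with targets $F_i\subseteq V$ and costs $\mathrm{Cost}_i(\rho)=$ least $k$ with $\rho_k\in F_i$ (or $+\infty$); $v_0\in V$. Extended game: arena $X$ with vertices $V^X=V\times2^\Pi$, edges $((v,I),(v',I'))\in E^X$ iff $(v,v')\in E$ and $I'=I\cup\{i:v'\in F_i\}$, $(v,I)\in V^X_i$ iff $v\in V_i$, targets $F^X_i=\{(v,I):i\in I\}$ with corresponding reachability costs $\mathrm{Cost}_i$; $x_0=(v_0,\{i:v_0\in F_i\})$. $I(u)$ is the second component of $u$. $\mathcal{I}$ is the set of $I$ with some $(v,I)$ reachable from $x_0$, $N=|\mathcal{I}|$, $J_1<\dots<J_N$ a fixed total order of $\mathcal{I}$ extending $I<I'$ iff $I\ne I'$ and some $(v',I')$ is reachable from some $(v,I)$. $V^{\ge J_n}=\{(v,J_m):v\in V,m\ge n\}$. Labelings: for $\lambda:V^X\to\mathbb{N}\cup\{+\infty\}$, a play $\rho$ of $X$ is $\lambda$-consistent if $\mathrm{Cost}_i(\rho_{\ge n})\le\lambda(\rho_n)$ for all $n$ and $i$ with $\rho_n\in V^X_i$.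 $\lambda^0(u)=0$ if $u\in V^X_i$ and $i\in I(u)$, else $+\infty$. The update of $\lambda^k$ w.r.t. $V^{\ge J_n}$ keeps values outside $V^{\ge J_n}$ and for $u\in V^{\ge J_n}\cap V^X_i$ sets $\lambda^{k+1}(u)=0$ if $i\in I(u)$, otherwise $1+\min_{(u,u')\in E^X}\sup\{\mathrm{Cost}_i(\rho):\rho\in\Lambda^k(u')\}$ ($1+(+\infty)=+\infty$). The sequence is generated by $n_0=N$, $\lambda^{k+1}=$ update of $\lambda^k$ w.r.t. $V^{\ge J_{n_k}}$, $n_{k+1}=n_k-1$ if $\lambda^{k+1}=\lambda^k$ and $n_k>1$, else $n_{k+1}=n_k$. $\Lambda^k(v)$ is the set of $\lambda^k$-consistent plays of $X$ from $v$. *)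

(* Defs.v *)
From Stdlib Require Import ClassicalEpsilon.
From mathcomp Require Import all_boot.
Set Implicit Arguments. Unset Strict Implicit. Unset Printing Implicit Defensive.

(* N ∪ {+oo}: Some n = n, None = +oo. *)
Definition ninf := option nat.

Definition ninf_le (x y : ninf) : bool :=
  match y, x with
  | None, _ => true
  | Some _, None => false
  | Some m, Some n => n <= m
  end.

Definition ninf_succ (x : ninf) : ninf :=
  match x with Some n => Some n.+1 | None => None end.

Definition ninf_min (x y : ninf) : ninf := if ninf_le x y then x else y.

(* least upper bound of a set of elements of N ∪ {+oo} (a complete lattice;
   sup of the empty set is 0) *)
Definition is_lub_ninf (S : ninf -> Prop) (s : ninf) : Prop :=
  (forall x, S x -> ninf_le x s) /\
  (forall b, (forall x, S x -> ninf_le x b) -> ninf_le s b).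

Definition sup_ninf (S : ninf -> Prop) : ninf :=
  epsilon (inhabits None) (is_lub_ninf S).

Section ExtendedGame.
Variables (P V : finType) (owner : V -> P) (E : rel V) (F : P -> {set V})
          (J : seq {set P}).

Definition XV : finType := (V * {set P})%type.

Definition EX : rel XV :=
  fun x y => E x.1 y.1 && (y.2 == x.2 :|: [set i | y.1 \in F i]).

Definition x0 (v0 : V) : XV := (v0, [set i | v0 \in F i]).

Definition ownX (u : XV) : P := owner u.1.

Definition play (rho : nat -> XV) : Prop := forall n, EX (rho n) (rho n.+1).

Definition suffix (rho : nat -> XV) (n : nat) : nat -> XV := fun k => rho (n + k).

Definition cost (i : P) (rho : nat -> XV) : ninf :=
  match excluded_middle_informative (exists k, (fun k => i \in (rho k).2) k) with
  | left h => Some (ex_minn h)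
  | right _ => None
  end.

Definition consistent (lam : XV -> ninf) (rho : nat -> XV) : Prop :=
  play rho /\
  forall n i, ownX (rho n) = i -> ninf_le (cost i (suffix rho n)) (lam (rho n)).

Definition Lambda (lam : XV -> ninf) (u : XV) : (nat -> XV) -> Prop :=
  fun rho => rho 0 = u /\ consistent lam rho.

Definition lam0 : XV -> ninf :=
  fun u => if ownX u \in u.2 then Some 0 else None.

(* V^{>= J_n} (J_1 < ... < J_N is the 1-indexed list J) *)
Definition inVge (n : nat) (u : XV) : bool :=
  [exists m : 'I_(size J), (n <= m.+1) && (u.2 == nth set0 J m)].

Definition update (lam : XV -> ninf) (n : nat) : XV -> ninf :=
  fun u =>
    if inVge n u then
      if ownX u \in u.2 then Some 0
      else ninf_succ (\big[ninf_min/None]_(u' | EX u u')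
                        sup_ninf (fun c => exists rho, Lambda lam u' rho /\
                                                       c = cost (ownX u) rho))
    else lam u.

Definition step (st : (XV -> ninf) * nat) : (XV -> ninf) * nat :=
  let: (lam, n) := st in
  let lam' := update lam n in
  (lam', if [forall u, lam' u == lam u] && (1 < n) then n.-1 else n).

Definition state (k : nat) : (XV -> ninf) * nat := iter k step (lam0, size J).

Definition lamk (k : nat) : XV -> ninf := (state k).1.

Definition Lambdak (k : nat) (u : XV) : (nat -> XV) -> Prop := Lambda (lamk k) u.

End ExtendedGame.

(* Main.v *)
Require Import Defs.
From mathcomp Require Import all_boot.
From Stdlib Require Import Classical ClassicalEpsilon Lia.
From mathcomp Require Import zify.

Lemma ninf_le_refl x : ninf_le x x.
Proof. by case: x => //= n. Qed.

Lemma ninf_le_trans x y z : ninf_le x y -> ninf_le y z -> ninf_le x z.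
Proof.
case: z => [c|] //; case: y => [b|] //; case: x => [a|] //=.
exact: leq_trans.
Qed.

Lemma ninf_le0 x : ninf_le (Some 0) x.
Proof. by case: x. Qed.

Lemma ninf_succ_mono x y : ninf_le x y -> ninf_le (ninf_succ x) (ninf_succ y).
Proof. by case: y => [b|] //; case: x => [a|]. Qed.

Lemma ninf_min_mono x1 x2 y1 y2 : ninf_le x1 x2 -> ninf_le y1 y2 ->
  ninf_le (ninf_min x1 y1) (ninf_min x2 y2).
Proof.
rewrite /ninf_min.
case: x1 => [a1|]; case: x2 => [a2|]; case: y1 => [b1|]; case: y2 => [b2|] //=;
  rewrite ?leqnn //; try lia.
all: repeat case: ifP => //=; lia.
Qed.

Lemma lub_exists (S : ninf -> Prop) : exists s, is_lub_ninf S s.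
Proof.
case: (classic (exists b : nat, forall x, S x -> ninf_le x (Some b))) => [[b Hb]|Hn].
- elim: b Hb => [|b IH] Hb.
    exists (Some 0); split => // b' _; exact: ninf_le0.
  case: (classic (S (Some b.+1))) => HS.
    exists (Some b.+1); split => // b' Hb'; exact: Hb' _ HS.
  apply: IH => x Sx; have := Hb x Sx; case: x Sx => [a|] Sx //= Ha.
  rewrite leq_eqVlt in Ha; case/orP: Ha => [/eqP Ha|//].
  by subst a.
- exists None; split => // [[m|]] Hm //; exfalso; apply: Hn; by exists m.
Qed.

Lemma sup_spec S : is_lub_ninf S (sup_ninf S).
Proof. rewrite /sup_ninf; apply: epsilon_spec; exact: lub_exists. Qed.

Lemma sup_mono (S T : ninf -> Prop) : (forall x, S x -> T x) ->
  ninf_le (sup_ninf S) (sup_ninf T).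
Proof.
move=> ST; have [_ HS] := sup_spec S; have [HT _] := sup_spec T.
apply: HS => x Sx; exact: HT _ (ST _ Sx).
Qed.

Section Proof.
Variables (P V : finType) (owner : V -> P) (E : rel V) (F : P -> {set V})
          (J : seq {set P}).

Definition G (lam : XV P V -> ninf) (u : XV P V) : ninf :=
  if ownX owner u \in u.2 then Some 0
  else ninf_succ (\big[ninf_min/None]_(u' | EX E F u u')
                        sup_ninf (fun c => exists rho, Lambda owner E F lam u' rho /\
                                                       c = cost (ownX owner u) rho)).

Definition lle (l1 l2 : XV P V -> ninf) := forall u, ninf_le (l1 u) (l2 u).

Lemma Lambda_mono l1 l2 u rho : lle l1 l2 -> Lambda owner E F l1 u rho ->
  Lambda owner E F l2 u rho.
Proof.
move=> H [H0 [Hp Hc]]; split => //; split => // n i Hi.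
exact: ninf_le_trans (Hc n i Hi) (H _).
Qed.

Lemma G_mono l1 l2 : lle l1 l2 -> lle (G l1) (G l2).
Proof.
move=> H u; rewrite /G; case: ifP => _; first exact: ninf_le_refl.
apply: ninf_succ_mono.
apply: (big_ind2 (fun a b => ninf_le a b)) => //.
- exact: ninf_min_mono.
- move=> u' _; apply: sup_mono => c [rho [HL ->]].
  exists rho; split => //; exact: Lambda_mono HL.
Qed.

Lemma lamkS k : exists n, lamk owner E F J k.+1 = update owner E F J (lamk owner E F J k) n.
Proof.
rewrite /lamk /state iterS; case: (iter k _ _) => lam n /=; by exists n.
Qed.

Lemma update_eq lam n u :
  update owner E F J lam n u = if inVge J n u then G lam u else lam u.
Proof. by []. Qed.

Lemma lam0_form k u : lamk owner E F J k u = lam0 owner u \/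
  exists j, j < k /\ lamk owner E F J k u = G (lamk owner E F J j) u.
Proof.
elim: k u => [|k IH] u; first by left.
have [n ->] := lamkS k; rewrite update_eq; case: ifP => _.
  right; exists k; split => //.
case: (IH u) => [->|[j [Hj ->]]]; first by left.
right; exists j; split => //; exact: ltnW.
Qed.

Lemma G_lam0 l u : ninf_le (G l u) (lam0 owner u).
Proof. rewrite /G /lam0; case: ifP => _ //; exact: ninf_le_refl. Qed.

Lemma step_mono k : lle (lamk owner E F J k.+1) (lamk owner E F J k).
Proof.
elim/ltn_ind: k => k IH.
have chain : forall j, j <= k -> lle (lamk owner E F J k) (lamk owner E F J j).
  move=> j; elim: k IH => [|k IHk] IH Hj.
    by rewrite leqn0 in Hj; move/eqP: Hj => -> u; exact: ninf_le_refl.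
  rewrite leq_eqVlt in Hj; case/orP: Hj => [/eqP ->|Hj].
    move=> u; exact: ninf_le_refl.
  move=> u; apply: ninf_le_trans (IH k (ltnSn k) u) _.
  apply: IHk => //; move=> i Hi; apply: IH; exact: ltnW.
move=> u; have [n ->] := lamkS k; rewrite update_eq; case: ifP => _;
  last exact: ninf_le_refl.
case: (lam0_form k u) => [->|[j [Hj ->]]]; first exact: G_lam0.
apply: G_mono; apply: chain; exact: ltnW.
Qed.

Lemma lam_mono k k' : k <= k' -> lle (lamk owner E F J k') (lamk owner E F J k).
Proof.
move=> H; rewrite -(subnKC H); elim: (k' - k) => [|d IH] u.
  rewrite addn0; exact: ninf_le_refl.
rewrite addnS; exact: ninf_le_trans (step_mono _ u) (IH u).
Qed.

End Proof.

Theorem lemma2p9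
  (P V : finType) (owner : V -> P) (E : rel V) (F : P -> {set V}) (v0 : V)
  (J : seq {set P})
  (hV : 2 <= #|V|) (hP : #|P| <= #|V|)
  (hsucc : forall v, exists v', E v v')
  (hJuniq : uniq J)
  (hJreach : forall I, I \in J <-> exists v, connect (EX E F) (x0 F v0) (v, I))
  (hJorder : forall I I', I \in J -> I' \in J -> I != I' ->
               (exists v v', connect (EX E F) (v, I) (v', I')) ->
               index I J < index I' J) :
  forall (v : XV P V) (k k' : nat), k <= k' ->
    ninf_le (lamk owner E F J k' v) (lamk owner E F J k v) /\
    (forall rho, Lambdak owner E F J k' v rho -> Lambdak owner E F J k v rho).
Proof.
move=> v k k' H; split; first exact: lam_mono.
move=> rho; apply: Lambda_mono; exact: lam_mono.
Qed.
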